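(* Assume the bounded-cost assumption and $J\ge2$. Suppose that for every $t\in[T]$ there is $\hat Z_t\in\mathcal Z$ with $\hat Z^j_t=\hat Z_t$ for all $j\in[J]$, and let $\underline L_T=\sum_{t=1}^T\mathbf 1\{\hat Z_t\ne Z_t\}$. If all agents use POMWU with learning rate $\eta^\star=\Theta\big(J^{-1/2}T^{-1/4}[\ln K(\underline L_T+m)]^{1/4}\big)$, then for every $j\in[J]$, $$\mathrm{Reg}^j_T=O\big([\ln K(\underline L_T+m)]^{3/4}T^{1/4}J^{1/2}\big).$$
   Context: Setting. There are $J$ agents indexed by $j\in[J]$. Agent $j$ has a finite action set $\mathcal A^j=\{a^j_1,\dots,a^j_K\}$ with $K$ elements; $\mathcal A=\prod_i\mathcal A^i$, $\mathcal A^{-j}=\prod_{i\ne j}\mathcal A^i$. $\Delta_K$ is the probability simplex in $\mathbb R^K$, $w\in\Delta_K$ identified with a distribution on $\mathcal A^j$. The context set $\mathcal Z=\{z_1,\dots,z_m\}\subset\mathbb R^d$ is finite with $m$ elements. Agent $j$ has $\phi^j:\mathcal A\to\mathbb R^d$ and cost $c^j(\mathbf w,Z)=\mathbb E_{\mathbf a\sim\mathbf w}[\langle\phi^j(\mathbf a),Z\rangle]$; $c^j(w,\mathbf w^{-j},Z)=c^j(w\otimes\mathbf w^{-j},Z)$. $\Phi^j(\mathbf w^{-j})\in\mathbb R^{d\times K}$ has entries $\Phi^j(\mathbf w^{-j})_{\ell,k}=\mathbb E_{\mathbf a^{-j}\sim\mathbf w^{-j}}[\phi^j(a^j_k,\mathbf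 a^{-j})[\ell]]$. Bounded-cost assumption: $|\langle Z,\phi^j(\mathbf a)\rangle|\le1$ for all $j,\mathbf a,Z$. Game protocol: $T$ rounds, fixed sequence $Z_1,\dots,Z_T\in\mathcal Z$; at round $t$ each agent $j$ receives a prediction $\hat Z^j_t\in\mathcal Z$, plays $w^j_t\in\Delta_K$, incurs $c^j(w^j_t,\mathbf w^{-j}_t,Z_t)$ with $\mathbf w^{-j}_t=\bigotimes_{i\ne j}w^i_t$, and observes $Z_t$ and $\Phi^j(\mathbf w^{-j}_t)$. Contextual external regret: $\mathrm{Reg}^j_T=\sum_{t=1}^Tc^j(w^j_t,\mathbf w^{-j}_t,Z_t)-\min_{\pi:\mathcal Z\to\Delta_K}\sum_{t=1}^Tc^j(\pi(Z_t),\mathbf w^{-j}_t,Z_t)$. POMWU with learning rate $\eta>0$ (for agent $j$): maintain for each $z\in\mathcal Z$ a vector $\rho_z\in\mathbb R^K_{>0}$, initialized to $(1/K,\dots,1/K)$, and a matrix $\Psi_z\in\mathbb R^{d\times K}$, initialized to $0$. At round $t$, with $\hat Z=\hat Z^j_t$, play $w^j_t[\ell]=\rho_{\hat Z}[\ell]\exp(-\eta(\Psi_{\hat Z}^\top\hat Z)[\ell])/\sum_{k=1}^K\rho_{\hat Z}[k]\exp(-\eta(\Psi_{\hat Z}^\top\hat Z)[k])$. After observing $Z_t$ and $\Phi_t=\Phi^j(\mathbf w^{-j}_t)$, set $\Psi_{Z_t}\leftarrow\Phi_t$ and $\rho_{Z_t}[\ell]\leftarrow\rho_{Z_t}[\ell]\exp(-\eta(\Phi_t^\top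 Z_t)[\ell])$ for all $\ell$. $O,\Theta$ hide absolute constants. *)

(* Defs.v *)
From mathcomp Require Import all_boot all_order all_algebra.
From mathcomp Require Import reals sequences exp.
Set Implicit Arguments. Unset Strict Implicit. Unset Printing Implicit Defensive.
Import Order.TTheory GRing.Theory Num.Theory.
Local Open Scope ring_scope.

Section Game.
Variables (R : realType) (J K m d : nat).

Definition profile := {ffun 'I_J -> 'I_K}.

Definition in_simplex (v : 'I_K -> R) : Prop :=
  (forall k, 0 <= v k) /\ \sum_(k < K) v k = 1.

Definition inner (u v : 'rV[R]_d) : R := \sum_(l < d) u 0 l * v 0 l.

Definition cost (phi : profile -> 'rV[R]_d) (w : 'I_J -> 'I_K -> R)
    (Z : 'rV[R]_d) : R :=
  \sum_(a : profile) (\prod_(i < J) w i (a i)) * inner (phi a) Z.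

Definition Phi (j : 'I_J) (phi : profile -> 'rV[R]_d) (w : 'I_J -> 'I_K -> R)
    : 'M[R]_(d, K) :=
  \matrix_(l < d, k < K)
     \sum_(a : profile | a j == k) (\prod_(i < J | i != j) w i (a i)) * phi a 0 l.

Definition trmul (Psi : 'M[R]_(d, K)) (z : 'rV[R]_d) (l : 'I_K) : R :=
  \sum_(i < d) Psi i l * z 0 i.

Record pomwu_state := PState {
  rho : 'I_m -> 'I_K -> R;
  Psi : 'I_m -> 'M[R]_(d, K) }.

Definition pomwu_init : pomwu_state :=
  PState (fun _ _ => K%:R^-1) (fun _ => 0).

Definition pomwu_play (eta : R) (ctx : 'I_m -> 'rV[R]_d) (zh : 'I_m)
    (s : pomwu_state) : 'I_K -> R :=
  fun l => rho s zh l * expR (- eta * trmul (Psi s zh) (ctx zh) l) /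
           \sum_(k < K) rho s zh k * expR (- eta * trmul (Psi s zh) (ctx zh) k).

Definition pomwu_update (eta : R) (ctx : 'I_m -> 'rV[R]_d) (zt : 'I_m)
    (Phit : 'M[R]_(d, K)) (s : pomwu_state) : pomwu_state :=
  PState (fun z l => if z == zt
                     then rho s z l * expR (- eta * trmul Phit (ctx zt) l)
                     else rho s z l)
         (fun z => if z == zt then Phit else Psi s z).

(* Joint dynamics: all J agents run POMWU with learning rate eta.
   phi j = phi^j, ctx = enumeration of the context set,
   Zs t / Zhat t = indices of Z_t and of the common prediction hat Z_t
   (rounds are numbered from 0). *)
Fixpoint pomwu_states (eta : R) (phi : 'I_J -> profile -> 'rV[R]_d)
    (ctx : 'I_m -> 'rV[R]_d) (Zs Zhat : nat -> 'I_m) (t : nat)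
    : 'I_J -> pomwu_state :=
  match t with
  | 0 => fun _ => pomwu_init
  | t'.+1 =>
      let st := pomwu_states eta phi ctx Zs Zhat t' in
      let w := fun i => pomwu_play eta ctx (Zhat t') (st i) in
      fun j => pomwu_update eta ctx (Zs t') (Phi j (phi j) w) (st j)
  end.

Definition pomwu_profile (eta : R) (phi : 'I_J -> profile -> 'rV[R]_d)
    (ctx : 'I_m -> 'rV[R]_d) (Zs Zhat : nat -> 'I_m) (t : nat)
    : 'I_J -> 'I_K -> R :=
  fun i => pomwu_play eta ctx (Zhat t)
             (pomwu_states eta phi ctx Zs Zhat t i).

Definition replace (w : 'I_J -> 'I_K -> R) (j : 'I_J) (v : 'I_K -> R)
    : 'I_J -> 'I_K -> R :=
  fun i => if i == j then v else w i.

(* sum_t c^j(w_t, Z_t) - sum_t c^j(pi(Z_t), w^{-j}_t, Z_t) for a fixed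
   policy pi : Z -> Delta_K (rounds t = 0..T-1). Contextual regret Reg^j_T is
   the maximum of this quantity over all policies pi. *)
Definition regret_against (T : nat) (phi : 'I_J -> profile -> 'rV[R]_d)
    (ctx : 'I_m -> 'rV[R]_d) (Zs : nat -> 'I_m)
    (w : nat -> 'I_J -> 'I_K -> R) (j : 'I_J) (pi : 'I_m -> 'I_K -> R) : R :=
  \sum_(t < T) cost (phi j) (w t) (ctx (Zs t))
  - \sum_(t < T) cost (phi j) (replace (w t) j (pi (Zs t))) (ctx (Zs t)).

Definition pred_errors (T : nat) (Zs Zhat : nat -> 'I_m) : nat :=
  #|[set t : 'I_T | Zhat t != Zs t]|.

End Game.

(* Main.v *)
Require Import Defs.
From mathcomp Require Import all_boot all_order all_algebra.
From mathcomp Require Import reals sequences exp.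
From mathcomp Require Import ring lra zify.
Set Implicit Arguments. Unset Strict Implicit. Unset Printing Implicit Defensive.
Import Order.TTheory GRing.Theory Num.Theory.
Local Open Scope ring_scope.
Section Generic.
Variables (R : realType) (K : nat).

Definition dist (q : 'I_K -> R) := (forall k, 0 <= q k) /\ \sum_k q k = 1.
Definition nrm (v : 'I_K -> R) (k : 'I_K) := v k / \sum_i v i.

Lemma jensen (q u : 'I_K -> R) : dist q ->
  expR (\sum_k q k * u k) <= \sum_k q k * expR (u k).
Proof.
move=> [q0 q1]; set ub := \sum_k q k * u k.
have -> : \sum_k q k * expR (u k) = expR ub * \sum_k q k * expR (u k - ub).
  rewrite big_distrr /=; apply: eq_bigr => k _.
  by rewrite mulrCA -expRD addrCA subrr addr0.
rewrite -[X in X <= _]mulr1 ler_wpM2l ?expR_ge0 //.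
have E : \sum_k q k * (1 + (u k - ub)) = 1.
  under eq_bigr do rewrite mulrDr mulr1 mulrBr.
  rewrite big_split /= sumrB q1 -/ub -big_distrl /= q1 mul1r.
  by rewrite subrr addr0.
rewrite -{1}E; apply: ler_sum => k _.
by rewrite ler_wpM2l // expR_ge1Dx.
Qed.

Lemma sum_gt0 (u : 'I_K -> R) (k : 'I_K) : (forall i, 0 < u i) -> 0 < \sum_i u i.
Proof.
move=> hu; rewrite (bigD1 k) //=; apply: ltr_wpDr; last exact: hu.
by apply: sumr_ge0 => i _; apply: ltW.
Qed.

Lemma nrm_dist (u : 'I_K -> R) : (0 < K)%N -> (forall i, 0 < u i) -> dist (nrm u).
Proof.
move=> Kp hu; split=> [k|].
  by rewrite /nrm divr_ge0 // ?ltW // (sum_gt0 k).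
rewrite /nrm -big_distrl /= divff //; apply: lt0r_neq0.
exact: (sum_gt0 (Ordinal Kp)).
Qed.


Lemma expR_le12 (x : R) : 0 <= x -> x <= 1/2 -> expR x <= 1 + 2 * x.
Proof.
move=> x0 x1.
have h1 := expR_ge1Dx (- x).
have h2 : expR x * expR (- x) = 1 by rewrite expRxMexpNx_1.
have h3 := expR_gt0 x.
nra.
Qed.

Lemma le_ln_expR (a b : R) : 0 < b -> expR a <= b -> a <= ln b.
Proof. by move=> b0 h; rewrite -(expRK a) ler_ln // posrE expR_gt0. Qed.

Lemma ratio (u v : 'I_K -> R) (e : R) :
  (forall k, 0 < u k) -> (forall k, 0 < v k) -> 0 <= e ->
  (forall k, u k * expR (- e) <= v k /\ v k <= u k * expR e) ->
  forall k, `|nrm u k - nrm v k| <= nrm u k * (expR (e + e) - 1).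
Proof.
move=> hu hv e0 huv k.
have Su := sum_gt0 k hu; have Sv := sum_gt0 k hv.
set S := \sum_i u i in Su *; set S' := \sum_i v i in Sv *.
have hS1 : S * expR (- e) <= S'.
  rewrite /S big_distrl /=; apply: ler_sum => i _; exact: (huv i).1.
have hS2 : S' <= S * expR e.
  rewrite /S big_distrl /=; apply: ler_sum => i _; exact: (huv i).2.
have [hk1 hk2] := huv k.
have E1 := expRxMexpNx_1 e.
have Ee : expR (e + e) = expR e * expR e by rewrite expRD.
have eg := expR_gt0 e; have eng := expR_gt0 (- e).
rewrite /nrm -/S -/S' Ee.
set a := u k; set b := v k.
have ha : 0 < a := hu k.
have hb : 0 < b := hv k.
set p := a / S; set q := b / S'.
have hp : a = p * S by rewrite /p mulrVK // unitfE lt0r_neq0.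
have hq : b = q * S' by rewrite /q mulrVK // unitfE lt0r_neq0.
have p0 : 0 <= p by rewrite /p divr_ge0 // ltW.
have q0 : 0 <= q by rewrite /q divr_ge0 // ltW.
have up : q <= p * (expR e * expR e).
  have : q * S' <= p * S * expR e by rewrite -hq -hp.
  move=> h.
  have : q * (S * expR (- e)) <= p * S * expR e by apply: (le_trans _ h); rewrite ler_wpM2l.
  move=> h'.
  have h3 : q * S <= p * (expR e * expR e) * S.
    have h4 := ler_wpM2r (ltW eg) h'.
    have e1 : q * (S * expR (- e)) * expR e = q * S.
      by transitivity (q * S * (expR e * expR (- e))); [ring | rewrite E1 mulr1].
    rewrite e1 in h4; have -> : p * (expR e * expR e) * S = p * S * expR e * expR e by ring.
    exact h4.
  by rewrite -(ler_pM2r Su).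
have lo : p <= q * (expR e * expR e).
  have : p * S * expR (- e) <= q * S' by rewrite -hq -hp.
  move=> h.
  have : p * S * expR (- e) <= q * (S * expR e) by apply: (le_trans h); rewrite ler_wpM2l.
  move=> h'.
  have h3 : p * S <= q * (expR e * expR e) * S.
    have h4 := ler_wpM2r (ltW eg) h'.
    have e1 : p * S * expR (- e) * expR e = p * S.
      by transitivity (p * S * (expR e * expR (- e))); [ring | rewrite E1 mulr1].
    rewrite e1 in h4; have -> : q * (expR e * expR e) * S = q * (S * expR e) * expR e by ring.
    exact h4.
  by rewrite -(ler_pM2r Su).
rewrite ler_norml; apply/andP; split; last by nra.
have := sqr_ge0 (expR e - 1).
nra.
Qed.


Lemma step (r M l : 'I_K -> R) (eta : R) : (0 < K)%N -> (forall k, 0 < r k) ->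
  eta * (\sum_k nrm (fun k => r k * expR (- eta * M k)) k * l k
     - \sum_k (nrm (fun k => r k * expR (- eta * M k)) k
               - nrm (fun k => r k * expR (- eta * l k)) k) * (l k - M k))
   <= ln (\sum_k r k) - ln (\sum_k r k * expR (- eta * l k)).
Proof.
move=> Kp hr.
set u := fun k => r k * expR (- eta * M k).
set v := fun k => r k * expR (- eta * l k).
have hu : forall k, 0 < u k by move=> k; rewrite /u mulr_gt0 ?expR_gt0.
have hv : forall k, 0 < v k by move=> k; rewrite /v mulr_gt0 ?expR_gt0.
pose k0 := Ordinal Kp.
have S0 := sum_gt0 k0 hr; have SM := sum_gt0 k0 hu; have Sl := sum_gt0 k0 hv.
have A1 : \sum_k nrm u k * (eta * M k) <= ln (\sum_k r k) - ln (\sum_k u k).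
  rewrite -ln_div ?posrE //; apply: le_ln_expR; first by rewrite divr_gt0.
  apply: (le_trans (jensen _ (nrm_dist Kp hu))).
  rewrite big_distrl /=; rewrite le_eqVlt; apply/orP; left; apply/eqP.
  apply: eq_bigr => k _; rewrite /nrm /u.
  have e : expR (- eta * M k) * expR (eta * M k) = 1 by rewrite -expRD mulNr addNr expR0.
  by transitivity (r k * (expR (- eta * M k) * expR (eta * M k)) / \sum_i u i);
    [ring | rewrite e mulr1].
have A2 : \sum_k nrm v k * (eta * (l k - M k)) <= ln (\sum_k u k) - ln (\sum_k v k).
  rewrite -ln_div ?posrE //; apply: le_ln_expR; first by rewrite divr_gt0.
  apply: (le_trans (jensen _ (nrm_dist Kp hv))).
  rewrite big_distrl /=; rewrite le_eqVlt; apply/orP; left; apply/eqP.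
  apply: eq_bigr => k _; rewrite /nrm /u /v.
  have e : expR (- eta * l k) * expR (eta * (l k - M k)) = expR (- eta * M k).
    by rewrite -expRD; congr expR; ring.
  by transitivity (r k * (expR (- eta * l k) * expR (eta * (l k - M k))) / \sum_i v i);
    [ring | rewrite e].
have E : eta * (\sum_k nrm u k * l k - \sum_k (nrm u k - nrm v k) * (l k - M k))
  = \sum_k nrm u k * (eta * M k) + \sum_k nrm v k * (eta * (l k - M k)).
  rewrite -sumrB -big_split mulr_sumr /=; apply: eq_bigr => k _; ring.
rewrite E; lra.
Qed.

Lemma err_bound (r M l : 'I_K -> R) (eta d : R) : (forall k, 0 < r k) ->
  0 <= eta -> 0 <= d -> (forall k, `|l k - M k| <= d) -> eta * d <= 1/4 ->
  \sum_k (nrm (fun k => r k * expR (- eta * M k)) k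
           - nrm (fun k => r k * expR (- eta * l k)) k) * (l k - M k)
  <= 4 * eta * d ^+ 2.
Proof.
move=> hr eta0 d0 hd small.
case: (posnP K) => [K0|Kp].
  rewrite big1 ?mulr_ge0 ?exprn_ge0 //; last by move=> k; have := leq_trans (ltn_ord k) (eq_leq K0).
set u := fun k => r k * expR (- eta * M k).
set v := fun k => r k * expR (- eta * l k).
have hu : forall k, 0 < u k by move=> k; rewrite /u mulr_gt0 ?expR_gt0.
have hv : forall k, 0 < v k by move=> k; rewrite /v mulr_gt0 ?expR_gt0.
have ed0 : 0 <= eta * d by rewrite mulr_ge0.
have huv : forall k, u k * expR (- (eta * d)) <= v k /\ v k <= u k * expR (eta * d).
  move=> k; rewrite /u /v -!mulrA !ler_pM2l //.
  have := hd k; rewrite ler_norml => /andP [h1 h2].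
  rewrite -!expRD !ler_expR; split; nra.
have R1 := ratio hu hv ed0 huv.
have eb : expR (eta * d + eta * d) - 1 <= 4 * (eta * d).
  have := expR_le12 (x := eta * d + eta * d); lra.
apply: (le_trans (y := \sum_k nrm u k * (expR (eta * d + eta * d) - 1) * d)).
  apply: ler_sum => k _.
  apply: (le_trans (ler_norm _)); rewrite normrM.
  apply: ler_pM; rewrite ?normr_ge0 //; exact: R1.
rewrite -big_distrl -big_distrl /= (nrm_dist Kp hu).2 mul1r.
have := ler_wpM2r d0 eb; nra.
Qed.

End Generic.

Section Prod.
Variables (R : realType) (J K : nat).

Definition pr (x : 'I_J -> 'I_K -> R) (b : {ffun 'I_J -> 'I_K}) := \prod_i x i (b i).

Lemma prod_sum (x : 'I_J -> 'I_K -> R) :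
  \sum_(b : {ffun 'I_J -> 'I_K}) pr x b = \prod_i \sum_k x i k.
Proof. by rewrite bigA_distr_bigA. Qed.

Lemma pr_ge0 (x : 'I_J -> 'I_K -> R) b : (forall i k, 0 <= x i k) -> 0 <= pr x b.
Proof. by move=> h; apply: prodr_ge0 => i _. Qed.

Lemma pr_sum1 (x : 'I_J -> 'I_K -> R) : (forall i, dist (x i)) ->
  \sum_(b : {ffun 'I_J -> 'I_K}) pr x b = 1.
Proof. by move=> h; rewrite prod_sum big1 // => i _; exact: (h i).2. Qed.

Definition hyb (x y : 'I_J -> 'I_K -> R) (n : nat) (i : 'I_J) (k : 'I_K) : R :=
  if (i < n)%N then y i k else x i k.

Lemma hybrid (x y : 'I_J -> 'I_K -> R) : (forall i, dist (x i)) -> (forall i, dist (y i)) ->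
  \sum_(b : {ffun 'I_J -> 'I_K}) `|pr x b - pr y b| <= \sum_i \sum_k `|x i k - y i k|.
Proof.
move=> hx hy.
have hh : forall n i, dist (hyb x y n i) by move=> n i; rewrite /dist /hyb; case: (i < n)%N; [exact: hy | exact: hx].
have step : forall (n : 'I_J) b, pr (hyb x y n.+1) b - pr (hyb x y n) b
   = (y n (b n) - x n (b n)) * \prod_(i | i != n) hyb x y n i (b i).
  move=> n b; rewrite /pr (bigD1 n) //= [X in _ - X](bigD1 n) //= /hyb ltnSn ltnn.
  have E : \prod_(i < J | i != n) (if (i < n.+1)%N then y i (b i) else x i (b i))
     = \prod_(i < J | i != n) (if (i < n)%N then y i (b i) else x i (b i)).
    apply: eq_bigr => i hi; rewrite ltnS leq_eqVlt.
    suff -> : (nat_of_ord i == nat_of_ord n) = false by [].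
    by apply/negbTE; move: hi; apply: contra => /eqP h; apply/eqP; apply: val_inj.
  by rewrite E mulrBl.
have tel : forall b, pr x b - pr y b = - \sum_(n < J) (pr (hyb x y n.+1) b - pr (hyb x y n) b).
  move=> b; rewrite -(big_mkord xpredT (fun n => pr (hyb x y n.+1) b - pr (hyb x y n) b)) telescope_sumr // opprB.
  have -> : pr (hyb x y J) b = pr y b.
    by rewrite /pr; apply: eq_bigr => i _; rewrite /hyb ltn_ord.
  have -> : pr (hyb x y 0) b = pr x b.
    by rewrite /pr; apply: eq_bigr => i _; rewrite /hyb ltn0.
  by [].
apply: (le_trans (y := \sum_b \sum_(n < J) `|pr (hyb x y n.+1) b - pr (hyb x y n) b|)).
  apply: ler_sum => b _; rewrite tel normrN; exact: ler_norm_sum.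
rewrite exchange_big /=; apply: ler_sum => n _.
rewrite le_eqVlt; apply/orP; left; apply/eqP.
pose c i k := if i == n then `|x n k - y n k| else hyb x y n i k.
transitivity (\sum_(b : {ffun 'I_J -> 'I_K}) pr c b).
  apply: eq_bigr => b _; rewrite step normrM distrC.
  rewrite /pr [RHS](bigD1 n) //= /c eqxx; congr (_ * _).
  rewrite ger0_norm; last by apply: prodr_ge0 => i _; exact: (hh _ _).1.
  by apply: eq_bigr => i /negbTE ->.
rewrite prod_sum (bigD1 n) //= [X in _ * X]big1 ?mulr1; first by rewrite /c eqxx.
move=> i /negbTE hi; rewrite /c.
under eq_bigr do rewrite hi.
exact: (hh _ _).2.
Qed.

End Prod.

Section Game1.
Variables (R : realType) (J K d : nat).

Lemma trmulE j (f : profile J K -> 'rV[R]_d) (v : 'I_J -> 'I_K -> R) (Z : 'rV[R]_d) k :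
  trmul (Phi j f v) Z k =
  \sum_(b : profile J K | b j == k) (\prod_(i | i != j) v i (b i)) * inner (f b) Z.
Proof.
rewrite /trmul /inner.
under eq_bigr do rewrite mxE big_distrl /=.
rewrite exchange_big /=; apply: eq_bigr => b _.
rewrite big_distrr /=; apply: eq_bigr => l _.
by rewrite mulrA.
Qed.

Definition ind (j : 'I_J) (a : 'I_K) (v : 'I_J -> 'I_K -> R) (i : 'I_J) (k : 'I_K) : R :=
  if i == j then (k == a)%:R else v i k.

Lemma ind_dist j a v : (forall i, i != j -> dist (v i)) -> forall i, dist (ind j a v i).
Proof.
move=> hv i; rewrite /dist /ind; case: eqP => [_|/eqP hij]; last exact: hv.
split=> [k|]; first exact: ler0n.
by rewrite (bigD1 a) //= eqxx big1 ?addr0 // => k /negbTE ->.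
Qed.

Lemma ind_prod j a v (F : profile J K -> R) :
  \sum_(b : profile J K | b j == a) (\prod_(i | i != j) v i (b i)) * F b
  = \sum_(b : profile J K) pr (ind j a v) b * F b.
Proof.
rewrite big_mkcond; apply: eq_bigr => b _.
rewrite /pr [in RHS](bigD1 j) //= /ind eqxx.
case: (b j == a) => /=; last by rewrite !mul0r.
rewrite mul1r; congr (_ * _); apply: eq_bigr => i /negbTE ->; by [].
Qed.

Lemma loss_bound j (phi : profile J K -> 'rV[R]_d) (v : 'I_J -> 'I_K -> R) Z a :
  (forall b, `|inner (phi b) Z| <= 1) ->
  (forall i, i != j -> dist (v i)) -> `|trmul (Phi j phi v) Z a| <= 1.
Proof.
move=> hb hv; rewrite trmulE ind_prod.
have hd := ind_dist a hv.
apply: (le_trans (ler_norm_sum _ _ _)).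
rewrite -(pr_sum1 hd); apply: ler_sum => b _.
rewrite normrM ger0_norm; last by apply: pr_ge0 => i k; exact: (hd i).1.
rewrite -[X in _ <= X]mulr1; apply: ler_wpM2l => //.
by apply: pr_ge0 => i k; exact: (hd i).1.
Qed.

Lemma loss_diff j (phi : profile J K -> 'rV[R]_d) (v v' : 'I_J -> 'I_K -> R) Z a :
  (forall b, `|inner (phi b) Z| <= 1) ->
  (forall i, i != j -> dist (v i)) -> (forall i, i != j -> dist (v' i)) ->
  `|trmul (Phi j phi v) Z a - trmul (Phi j phi v') Z a|
    <= \sum_(i | i != j) \sum_k `|v i k - v' i k|.
Proof.
move=> hb hv hv'; rewrite !trmulE !ind_prod -sumrB.
have hd := ind_dist a hv; have hd' := ind_dist a hv'.
apply: (le_trans (ler_norm_sum _ _ _)).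
apply: (le_trans (y := \sum_b `|pr (ind j a v) b - pr (ind j a v') b|)).
  apply: ler_sum => b _; rewrite -mulrBl normrM.
  rewrite -[X in _ <= X]mulr1; apply: ler_wpM2l => //.
apply: (le_trans (hybrid hd hd')).
rewrite (bigD1 j) //= big1 ?add0r.
  apply: ler_sum => i hij; apply: ler_sum => k _.
  by rewrite /ind (negbTE hij).
by move=> k _; rewrite /ind eqxx subrr normr0.
Qed.

Lemma cost_lin j (f : profile J K -> 'rV[R]_d) (v : 'I_J -> 'I_K -> R) Z :
  cost f v Z = \sum_k v j k * trmul (Phi j f v) Z k.
Proof.
under [RHS]eq_bigr do rewrite trmulE big_distrr /=.
rewrite /cost (partition_big (fun b : profile J K => b j) xpredT) //=.
apply: eq_bigr => k _; apply: eq_bigr => b /eqP <-.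
by rewrite (bigD1 j) //= mulrA.
Qed.

Lemma Phi_replace j (f : profile J K -> 'rV[R]_d) (v : 'I_J -> 'I_K -> R) u :
  Phi j f (replace v j u) = Phi j f v.
Proof.
apply/matrixP => l k; rewrite !mxE; apply: eq_bigr => b _.
congr (_ * _); apply: eq_bigr => i hij; by rewrite /replace (negbTE hij).
Qed.

Lemma regret_term j (f : profile J K -> 'rV[R]_d) (v : 'I_J -> 'I_K -> R) u Z :
  cost f v Z - cost f (replace v j u) Z = \sum_k (v j k - u k) * trmul (Phi j f v) Z k.
Proof.
rewrite !(cost_lin j) Phi_replace -sumrB; apply: eq_bigr => k _.
by rewrite /replace eqxx mulrBl.
Qed.

Lemma dist_le1 (p : 'I_K -> R) k : dist p -> p k <= 1.
Proof.
move=> [p0 p1]; rewrite -p1 (bigD1 k) //= lerDl; exact: sumr_ge0.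
Qed.

Lemma diff_le2 (a b l : 'I_K -> R) : dist a -> dist b -> (forall k, `|l k| <= 1) ->
  \sum_k (a k - b k) * l k <= 2.
Proof.
move=> ha hb hl.
have h : forall (c : 'I_K -> R), dist c -> `|\sum_k c k * l k| <= 1.
  move=> c [c0 c1]; apply: (le_trans (ler_norm_sum _ _ _)).
  rewrite -c1; apply: ler_sum => k _; rewrite normrM ger0_norm //.
  rewrite -[X in _ <= X]mulr1; exact: ler_wpM2l.
under eq_bigr do rewrite mulrBl.
rewrite sumrB; have := h _ ha; have := h _ hb.
rewrite !ler_norml => /andP [h1 h2] /andP [h3 h4]; lra.
Qed.

End Game1.

Section Game2.
Variables (R : realType) (J K m d : nat).
Variables (eta : R) (phi : 'I_J -> profile J K -> 'rV[R]_d) (ctx : 'I_m -> 'rV[R]_d)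
  (Zs Zhat : nat -> 'I_m).
Hypothesis Kp : (0 < K)%N.
Hypothesis hbd : forall j a z, `|inner (phi j a) (ctx z)| <= 1.

Definition st t := pomwu_states eta phi ctx Zs Zhat t.
Definition ww t := pomwu_profile eta phi ctx Zs Zhat t.
Definition gh t i z := pomwu_play eta ctx z (st t i).
Definition lss i t z a := trmul (Phi i (phi i) (ww t)) (ctx z) a.
Definition prd i t z a := trmul (Psi (st t i) z) (ctx z) a.

Lemma stS t i : st t.+1 i = pomwu_update eta ctx (Zs t) (Phi i (phi i) (ww t)) (st t i).
Proof. by []. Qed.

Lemma rho_pos t i z a : 0 < rho (st t i) z a.
Proof.
elim: t i z a => [|t IH] i z a; first by rewrite /st /= invr_gt0 ltr0n.
rewrite stS /=; case: ifP => _; rewrite ?mulr_gt0 ?expR_gt0 //.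
Qed.

Lemma gh_nrm t i z : gh t i z =
  nrm (fun l => rho (st t i) z l * expR (- eta * prd i t z l)).
Proof. by []. Qed.

Lemma gh_dist t i z : dist (gh t i z).
Proof.
rewrite gh_nrm; apply: nrm_dist => // l; rewrite mulr_gt0 ?expR_gt0 //; exact: rho_pos.
Qed.

Lemma ww_gh t i : ww t i = gh t i (Zhat t).
Proof. by []. Qed.

Lemma ww_dist t i : dist (ww t i).
Proof. exact: gh_dist. Qed.

Lemma lss_bound i t z a : `|lss i t z a| <= 1.
Proof. apply: loss_bound => // i' _; exact: ww_dist. Qed.

Fixpoint lastb (z : 'I_m) (n : nat) : option nat :=
  match n with 0 => None | n'.+1 => if Zs n' == z then Some n' else lastb z n' end.

Lemma lastb_None z n : lastb z n = None -> forall u, (u < n)%N -> Zs u != z.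
Proof.
elim: n => [|n IH] //= h u; rewrite ltnS leq_eqVlt; case: ifP h => // hz h.
by case/orP => [/eqP -> | /IH]; [rewrite hz | apply].
Qed.

Lemma lastb_Some z n s : lastb z n = Some s ->
  [/\ (s < n)%N, Zs s = z & forall u, (s < u < n)%N -> Zs u != z].
Proof.
elim: n => [|n IH] //=; case: ifP => hz.
  case=> <-; split=> //; [exact/eqP | move=> u /andP [h1 h2]].
  by move: (leq_ltn_trans h1 h2); rewrite ltnn.
move=> /IH [h1 h2 h3]; split=> //; first exact: ltnW.
move=> u /andP [hu1]; rewrite ltnS leq_eqVlt => /orP [/eqP -> | hu2].
  by rewrite hz.
by apply: h3; rewrite hu1.
Qed.

Lemma frozen z n t i : (n <= t)%N -> (forall u, (n <= u < t)%N -> Zs u != z) ->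
  (forall l, rho (st t i) z l = rho (st n i) z l) /\ Psi (st t i) z = Psi (st n i) z.
Proof.
elim: t => [|t IH] hnt hu.
  by move: hnt; rewrite leqn0 => /eqP ->.
move: hnt; rewrite leq_eqVlt => /orP [/eqP -> //| ]; rewrite ltnS => hnt.
have hz : (z == Zs t) = false.
  by apply/negbTE; rewrite eq_sym; apply: hu; rewrite hnt ltnSn.
have [IH1 IH2] := IH hnt (fun u h => hu u (match andP h with conj a b => ltac:(rewrite a; exact: ltnW b) end)).
by rewrite stS /= hz; split.
Qed.

Lemma Psi_val t i z : Psi (st t i) z =
  match lastb z t with None => 0 | Some s => Phi i (phi i) (ww s) end.
Proof.
case E: (lastb z t) => [s|].
  have [h1 h2 h3] := lastb_Some E.
  have [_ ->] := frozen (n := s.+1) i h1 (fun u h => h3 u h).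
  by rewrite stS /= h2 eqxx.
have [_ ->] := frozen (n := 0) (t := t) (z := z) i (leq0n _)
  (fun u h => lastb_None E (andP h).2).
by [].
Qed.

Lemma rho_prev t i z s : lastb z t = Some s ->
  forall l, rho (st t i) z l = rho (st s i) z l * expR (- eta * lss i s z l).
Proof.
move=> E l; have [h1 h2 h3] := lastb_Some E.
have [-> _] := frozen (n := s.+1) i h1 (fun u h => h3 u h).
by rewrite stS /= -h2 eqxx.
Qed.

Lemma trmul0 (Z : 'rV[R]_d) a : trmul (0 : 'M[R]_(d, K)) Z a = 0.
Proof. by rewrite /trmul big1 // => i _; rewrite mxE mul0r. Qed.

Lemma prd_val t i z a : prd i t z a =
  match lastb z t with None => 0 | Some s => lss i s z a end.
Proof. by rewrite /prd Psi_val; case: (lastb z t) => [s|]; rewrite ?trmul0. Qed.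

Lemma prd_bound i t z a : `|prd i t z a| <= 1.
Proof. rewrite prd_val; case: (lastb z t) => [s|]; rewrite ?normr0 //; exact: lss_bound. Qed.

Lemma stab t s i z : lastb z t = Some s -> 0 <= eta ->
  forall k, `|gh t i z k - gh s i z k| <= gh s i z k * (expR (3 * eta + 3 * eta) - 1).
Proof.
move=> E eta0 k; rewrite distrC !gh_nrm.
apply: ratio => //.
- by move=> l; rewrite mulr_gt0 ?expR_gt0 ?rho_pos.
- by move=> l; rewrite mulr_gt0 ?expR_gt0 ?rho_pos.
- by rewrite mulr_ge0.
move=> l; rewrite (rho_prev i E) (prd_val t) E.
have h1 := lss_bound i s z l; have h2 := prd_bound i s z l.
rewrite -!mulrA !ler_pM2l ?rho_pos // -!expRD !ler_expR.
move: h1 h2; rewrite !ler_norml => /andP [a1 a2] /andP [b1 b2].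
split; nra.
Qed.

Definition Sm t j z := \sum_l rho (st t j) z l.
Definition LS t j := \sum_z ln (Sm t j z).
Definition err t j :=
  \sum_k (nrm (fun k => rho (st t j) (Zs t) k * expR (- eta * prd j t (Zs t) k)) k
        - nrm (fun k => rho (st t j) (Zs t) k * expR (- eta * lss j t (Zs t) k)) k)
       * (lss j t (Zs t) k - prd j t (Zs t) k).

Lemma pot_step t j :
  eta * (\sum_k gh t j (Zs t) k * lss j t (Zs t) k - err t j) <= LS t j - LS t.+1 j.
Proof.
have := step (prd j t (Zs t)) (lss j t (Zs t)) eta Kp (rho_pos t j (Zs t)).
move=> h; apply: (le_trans h).
rewrite /LS [\sum_z ln (Sm t j z)](bigD1 (Zs t)) //= [\sum_z ln (Sm t.+1 j z)](bigD1 (Zs t)) //=.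
have -> : Sm t.+1 j (Zs t) = \sum_l rho (st t j) (Zs t) l * expR (- eta * lss j t (Zs t) l).
  by rewrite /Sm stS /= eqxx.
have -> : \sum_(z < m | z != Zs t) ln (Sm t.+1 j z) = \sum_(z < m | z != Zs t) ln (Sm t j z).
  by apply: eq_bigr => z hz; rewrite /Sm stS /= (negbTE hz).
rewrite /Sm; lra.
Qed.

Lemma pot_sum T j :
  eta * \sum_(t < T) (\sum_k gh t j (Zs t) k * lss j t (Zs t) k - err t j) <= LS 0 j - LS T j.
Proof.
elim: T => [|T IH]; first by rewrite big_ord0 mulr0 subrr.
rewrite big_ord_recr /= mulrDr; have := pot_step T j; lra.
Qed.

Lemma LS0 j : LS 0 j = 0.
Proof.
rewrite /LS big1 // => z _; rewrite /Sm (eq_bigr (fun _ => K%:R^-1)) //.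
rewrite sumr_const card_ord -[_^-1 *+ _]mulr_natl.
by rewrite mulfV ?ln1 // pnatr_eq0 -lt0n.
Qed.

Lemma rho_closed t i z l : rho (st t i) z l =
  K%:R^-1 * expR (- eta * \sum_(u < t | Zs u == z) lss i u z l).
Proof.
elim: t => [|t IH]; first by rewrite big_ord0 mulr0 expR0 mulr1.
rewrite stS /= big_mkcond big_ord_recr /= -big_mkcond /= IH.
case: (eqVneq z (Zs t)) => [->|hz].
  by rewrite ?eqxx -mulrA -expRD mulrDr.
by rewrite addr0.
Qed.

Lemma pot_final T j (p : 'I_m -> 'I_K -> R) : 0 <= eta -> (forall z, dist (p z)) ->
  - LS T j <= m%:R * ln K%:R + eta * \sum_(t < T) \sum_k p (Zs t) k * lss j t (Zs t) k.
Proof.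
move=> eta0 hp.
have each : forall z, - ln (Sm T j z) <=
    ln K%:R + eta * \sum_k p z k * \sum_(u < T | Zs u == z) lss j u z k.
  move=> z; set Lc := fun k => \sum_(u < T | Zs u == z) lss j u z k.
  have Kg : 0 < (K%:R : R) by rewrite ltr0n.
  have hS : K%:R^-1 * expR (\sum_k p z k * (- eta * Lc k)) <= Sm T j z.
    apply: (le_trans (y := K%:R^-1 * \sum_k p z k * expR (- eta * Lc k))).
      rewrite ler_wpM2l ?invr_ge0 ?ler0n //; exact: jensen.
    rewrite big_distrr /=; apply: ler_sum => k _; rewrite rho_closed mulrCA.
    rewrite -[X in _ <= X]mul1r; apply: ler_wpM2r; last exact: dist_le1.
    by rewrite mulr_ge0 ?invr_ge0 ?ler0n ?expR_ge0.
  have Sp : 0 < Sm T j z by rewrite (sum_gt0 (Ordinal Kp)) // => l; exact: rho_pos.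
  have := hS; rewrite -ler_ln ?posrE ?mulr_gt0 ?invr_gt0 ?expR_gt0 //.
  rewrite lnM ?posrE ?invr_gt0 ?expR_gt0 // lnV ?posrE // expRK.
  have -> : \sum_k p z k * (- eta * Lc k) = - (eta * \sum_k p z k * Lc k).
    by rewrite mulr_sumr -sumrN; apply: eq_bigr => k _; ring.
  lra.
rewrite /LS -sumrN.
apply: (le_trans (y := \sum_z (ln K%:R + eta * \sum_k p z k * \sum_(u < T | Zs u == z) lss j u z k))).
  by apply: ler_sum => z _; exact: each.
rewrite big_split /= sumr_const card_ord -[_ *+ m]mulr_natl -mulr_sumr.
rewrite le_eqVlt; apply/orP; left; apply/eqP; congr (_ + _ * _).
rewrite [RHS](partition_big (fun t : 'I_T => Zs t) xpredT) //=.
apply: eq_bigr => z _.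
under eq_bigr do rewrite big_distrr /=.
rewrite exchange_big /=; apply: eq_bigr => u /eqP <-; by [].
Qed.

Lemma regret_decomp T j pi : regret_against T phi ctx Zs ww j pi =
  \sum_(t < T) \sum_k (ww t j k - pi (Zs t) k) * lss j t (Zs t) k.
Proof. by rewrite /regret_against -sumrB; apply: eq_bigr => t _; rewrite regret_term. Qed.

Definition bad t := (lastb (Zs t) t == None) || (Zhat t != Zs t) ||
  (if lastb (Zs t) t is Some s then Zhat s != Zs s else false).

Lemma delta_all t j k : `|lss j t (Zs t) k - prd j t (Zs t) k| <= 2.
Proof.
apply: (le_trans (ler_normB _ _)).
have := lss_bound j t (Zs t) k; have := prd_bound j t (Zs t) k; lra.
Qed.

Lemma delta_good t j k : ~~ bad t -> 0 <= eta -> eta <= 1/12 ->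
  `|lss j t (Zs t) k - prd j t (Zs t) k| <= J%:R * (12 * eta).
Proof.
move=> hg eta0 eta1.
case E: (lastb (Zs t) t) hg => [s|]; last by rewrite /bad E eqxx.
rewrite /bad E /= negb_or => /andP [/negPn/eqP h1 /negPn/eqP h2].
have [hs1 hs2 hs3] := lastb_Some E.
rewrite prd_val E /lss.
have LD := @loss_diff R J K d j (phi j) (ww t) (ww s) (ctx (Zs t)) k
  (fun b => hbd j b (Zs t)) (fun i _ => ww_dist t i) (fun i _ => ww_dist s i).
apply: (le_trans LD).
set Ex := expR (3 * eta + 3 * eta) - 1.
have hEx : Ex <= 12 * eta.
  have := @expR_le12 R (3 * eta + 3 * eta) ltac:(lra) ltac:(lra); rewrite /Ex; lra.
have Ex0 : 0 <= Ex.
  have := expR_ge1Dx (3 * eta + 3 * eta); rewrite /Ex; lra.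
apply: (le_trans (y := \sum_(i | i != j) Ex)).
  apply: ler_sum => i _.
  rewrite !ww_gh h1 h2 hs2.
  apply: (le_trans (y := \sum_k0 gh s i (Zs t) k0 * Ex)).
    apply: ler_sum => k0 _; apply: stab => //; by rewrite hs2.
  by rewrite -big_distrl /= (gh_dist s i (Zs t)).2 mul1r.
apply: (le_trans (y := \sum_(i < J) Ex)).
  rewrite [X in _ <= X](bigID (fun i => i != j)) /= lerDl.
  by apply: sumr_ge0 => i _.
rewrite sumr_const card_ord -[_ *+ J]mulr_natl.
by apply: ler_wpM2l; rewrite ?ler0n.
Qed.

Lemma err_t t j : 0 <= eta -> eta <= 1/12 ->
  err t j <= 4 * eta * (if bad t then 4 else (J%:R * (12 * eta)) ^+ 2).
Proof.
move=> eta0 eta1; rewrite /err.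
have A2 : err t j <= 4 * eta * 2 ^+ 2.
  apply: err_bound; [exact: rho_pos | lra | lra | exact: delta_all | lra].
case: ifP => hb; first by move: A2; rewrite /err; lra.
have D0 : 0 <= J%:R * (12 * eta) by rewrite mulr_ge0 ?ler0n //; lra.
case: (lerP (J%:R * (12 * eta)) 2) => hD.
  apply: err_bound; [exact: rho_pos | lra | exact: D0 | | nra].
  by move=> k; apply: delta_good => //; rewrite hb.
apply: (le_trans A2); apply: ler_wpM2l; first lra.
nra.
Qed.

Lemma card_sumR T (P : pred 'I_T) : (#|[set t | P t]|%:R : R) = \sum_t (P t)%:R.
Proof.
rewrite -sum1_card natr_sum big_mkcond /=; apply: eq_bigr => t _.
by rewrite inE; case: (P t).
Qed.

Lemma nbad_T T : (#|[set t : 'I_T | bad t]| <= T)%N.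
Proof. by rewrite -[X in (_ <= X)%N]card_ord max_card. Qed.

Lemma nbad_L T : (#|[set t : 'I_T | bad t]| <= m + 2 * pred_errors T Zs Zhat)%N.
Proof.
set B1 := [set t : 'I_T | lastb (Zs t) t == None].
set B2 := [set t : 'I_T | Zhat t != Zs t].
set B3 := [set t : 'I_T | if lastb (Zs t) t is Some s then Zhat s != Zs s else false].
have sub : [set t : 'I_T | bad t] \subset B1 :|: B2 :|: B3.
  apply/subsetP => t; rewrite !inE /bad.
  by case/orP => [/orP [-> | ->] | ->]; rewrite ?orbT.
apply: (leq_trans (subset_leq_card sub)).
have U : forall (A B : {set 'I_T}), (#|A :|: B| <= #|A| + #|B|)%N.
  by move=> A B; rewrite cardsU leq_subr.
have h1 : (#|B1| <= m)%N.
  rewrite -(card_in_imset (f := fun t : 'I_T => Zs t)).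
    by rewrite -[X in (_ <= X)%N]card_ord max_card.
  move=> t1 t2; rewrite !inE => /eqP e1 /eqP e2 e; apply/val_inj => /=.
  case: (ltngtP t1 t2) => // lt.
  - by move: (lastb_None e2 lt); rewrite e eqxx.
  - by move: (lastb_None e1 lt); rewrite e eqxx.
pose f := fun t : 'I_T => insubd t (odflt 0%N (lastb (Zs t) t)) : 'I_T.
have hf : forall t, t \in B3 -> exists s,
    [/\ lastb (Zs t) t = Some s, val (f t) = s & Zhat s != Zs s].
  move=> t; rewrite inE; case E: (lastb (Zs t) t) => [s|] // hs.
  exists s; split => //; rewrite /f E val_insubd /=.
  have [a _ _] := lastb_Some E.
  by rewrite (ltn_trans a (ltn_ord t)).
have h3 : (#|B3| <= #|B2|)%N.
  rewrite -(card_in_imset (f := f)).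
    apply: subset_leq_card; apply/subsetP => _ /imsetP [t ht ->].
    by have [s [_ hv hz]] := hf t ht; rewrite inE hv.
  move=> t1 t2 ht1 ht2 e.
  have [s1 [E1 v1 _]] := hf t1 ht1; have [s2 [E2 v2 _]] := hf t2 ht2.
  have es : s1 = s2 by rewrite -v1 -v2 e.
  rewrite -es in E2.
  have [a1 b1 c1] := lastb_Some E1; have [a2 b2 c2] := lastb_Some E2.
  apply/val_inj => /=; case: (ltngtP t1 t2) => // lt.
  - have hu : (s1 < t1 < t2)%N by apply/andP; split.
    by move: (c2 _ hu); rewrite -b1 b2 eqxx.
  - have hu : (s1 < t2 < t1)%N by apply/andP; split.
    by move: (c1 _ hu); rewrite -b2 b1 eqxx.
have e2 : #|B2| = pred_errors T Zs Zhat by [].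
apply: (leq_trans (U _ _)).
have hU := U B1 B2.
rewrite -e2.
apply: (leq_trans (leq_add hU (leqnn _))).
rewrite -addnA mul2n -addnn addnA.
rewrite -addnA; apply: leq_add => //; exact: leq_add.
Qed.

Lemma main_bound T j pi : 0 < eta -> eta <= 1/12 -> (forall z, dist (pi z)) ->
  eta * regret_against T phi ctx Zs ww j pi <=
    eta * (2 * (pred_errors T Zs Zhat)%:R) + m%:R * ln K%:R
    + eta * (4 * eta * (4 * (#|[set t : 'I_T | bad t]|)%:R
                        + T%:R * (J%:R * (12 * eta)) ^+ 2)).
Proof.
move=> ep e12 hpi; rewrite regret_decomp.
set G := \sum_(t < T) (\sum_k gh t j (Zs t) k * lss j t (Zs t) k - err t j).
set E := \sum_(t < T) err t j.
set P := \sum_(t < T) \sum_k pi (Zs t) k * lss j t (Zs t) k.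
set B := \sum_(t < T) \sum_k (ww t j k - gh t j (Zs t) k) * lss j t (Zs t) k.
have dec : \sum_(t < T) \sum_k (ww t j k - pi (Zs t) k) * lss j t (Zs t) k
    = G + E - P + B.
  rewrite /G /E /P /B -big_split -sumrB -big_split /=.
  apply: eq_bigr => t _; rewrite subrK -sumrB -big_split /=.
  by apply: eq_bigr => k _; ring.
have hB : B <= 2 * (pred_errors T Zs Zhat)%:R.
  rewrite /pred_errors card_sumR mulr_sumr; apply: ler_sum => t _.
  case: (eqVneq (Zhat t) (Zs t)) => h /=.
    by rewrite big1 ?mulr0 // => k _; rewrite ww_gh h subrr mul0r.
  rewrite mulr1; apply: diff_le2; [exact: ww_dist | exact: gh_dist | ].
  by move=> k; exact: lss_bound.
have hG : eta * G <= - LS T j by have := pot_sum T j; rewrite LS0 sub0r.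
have hP := pot_final T j (ltW ep) hpi.
set c := (J%:R * (12 * eta)) ^+ 2.
have c0 : 0 <= c by rewrite /c sqr_ge0.
have hE : E <= 4 * eta * (4 * (#|[set t : 'I_T | bad t]|)%:R + T%:R * c).
  apply: (le_trans (y := \sum_(t < T) 4 * eta * (if bad t then 4 else c))).
    by apply: ler_sum => t _; apply: err_t => //; exact: ltW.
  rewrite -mulr_sumr; apply: ler_wpM2l; first lra.
  rewrite card_sumR mulr_sumr.
  have -> : T%:R * c = \sum_(t < T) c by rewrite sumr_const card_ord mulr_natl.
  rewrite -big_split /=; apply: ler_sum => t _; case: (bad t) => /=; lra.
have h1 := ler_wpM2l (ltW ep) hE.
have h2 := ler_wpM2l (ltW ep) hB.
rewrite -/P in hP.
rewrite dec.
have -> : eta * (G + E - P + B) = eta * G + eta * E - eta * P + eta * B by ring.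
lra.
Qed.

Lemma regret_le2T T j pi : (forall z, dist (pi z)) ->
  regret_against T phi ctx Zs ww j pi <= 2 * T%:R.
Proof.
move=> hpi; rewrite regret_decomp.
apply: (le_trans (y := \sum_(t < T) (2 : R))); last first.
  by rewrite sumr_const card_ord mulr_natr.
apply: ler_sum => t _; apply: diff_le2 => //; first exact: ww_dist.
by move=> k; exact: lss_bound.
Qed.

Lemma regret_K1 T j pi : K = 1%N -> (forall z, dist (pi z)) ->
  regret_against T phi ctx Zs ww j pi = 0.
Proof.
move=> K1 hpi; rewrite regret_decomp big1 // => t _.
rewrite big1 // => k _.
suff -> : ww t j k = pi (Zs t) k by rewrite subrr mul0r.
have eqk : forall k' : 'I_K, k' = k.
  by move=> k'; apply: val_inj => /=; have := ltn_ord k; have := ltn_ord k'; lia.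
have one : forall a : 'I_K -> R, \sum_k' a k' = a k.
  move=> a; rewrite (eq_bigr (fun _ => a k)); last by move=> k' _; rewrite (eqk k').
  by rewrite sumr_const card_ord K1.
have h1 := (ww_dist t j).2; have h2 := (hpi (Zs t)).2.
by rewrite one in h1; rewrite one in h2; rewrite h1 h2.
Qed.

End Game2.

Lemma pw_pow (R : realType) (A r : R) (n : nat) : 0 <= A -> r * n%:R = 1 -> (A `^ r) ^+ n = A.
Proof. by move=> A0 h; rewrite -powR_mulrn ?powR_ge0 // -powRrM h powRr1. Qed.

Unset Implicit Arguments.
Set Strict Implicit.

Theorem proposition9 (R : realType) :
  exists c C : R, 0 < c /\ 0 < C /\
  forall (J K m d T : nat) (ctx : 'I_m -> 'rV[R]_d)
         (phi : 'I_J -> profile J K -> 'rV[R]_d) (Zs Zhat : nat -> 'I_m),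
    injective ctx ->
    (2 <= J)%N -> (0 < K)%N -> (0 < T)%N ->
    (* bounded-cost assumption *)
    (forall j a z, `| inner (phi j a) (ctx z) | <= 1) ->
    let L := pred_errors T Zs Zhat in
    let eta := c * J%:R `^ (- (1/2)) * T%:R `^ (- (1/4))
                 * (ln K%:R * (L + m)%:R) `^ (1/4) in
    let w := pomwu_profile eta phi ctx Zs Zhat in
    forall (j : 'I_J) (pi : 'I_m -> 'I_K -> R),
      (forall z, in_simplex (pi z)) ->
      regret_against T phi ctx Zs w j pi
        <= C * (ln K%:R * (L + m)%:R) `^ (3/4) * T%:R `^ (1/4) * J%:R `^ (1/2).
Proof.
exists 1, 4000; split; first lra; split; first lra.
move=> J K m d T ctx phi Zs Zhat _ hJ hK hT hb L eta w j pi hpi.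
have hpi' : forall z, dist (pi z) := hpi.
have m0 : (0 < m)%N := leq_ltn_trans (leq0n _) (ltn_ord (Zs 0%N)).
have eta_eq : eta = 1 * J%:R `^ (- (1/2)) * T%:R `^ (- (1/4))
                 * (ln K%:R * (L + m)%:R) `^ (1/4) by [].
case: (eqVneq K 1%N) => [K1|K1].
  have -> : regret_against T phi ctx Zs w j pi = 0.
    exact: (regret_K1 eta phi ctx Zs Zhat hK T j K1 hpi').
  by rewrite !mulr_ge0 ?powR_ge0 //; lra.
have K2 : (2 <= K)%N by rewrite ltn_neqAle eq_sym K1 hK.
have ln2 : 1/2 <= ln (2 : R).
  apply: le_ln_expR; first lra.
  have := @expR_le12 R (1/2) ltac:(lra) ltac:(lra); lra.
have lnK : 1/2 <= ln (K%:R : R).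
  apply: (le_trans ln2); rewrite ler_ln ?posrE ?ltr0n //.
  by rewrite ler_nat.
set Mr := ((L + m)%:R : R) in eta_eq *.
set A := ln K%:R * Mr in eta_eq *.
set Lr := (L%:R : R).
have Mr0 : 0 < Mr by rewrite /Mr ltr0n addn_gt0 m0 orbT.
have A0 : 0 < A by rewrite /A mulr_gt0 //; lra.
set x := A `^ (1/4) in eta_eq *.
set s := T%:R `^ (1/4) in eta_eq *.
set y := J%:R `^ (1/2) in eta_eq *.
have x0 : 0 < x := powR_gt0 _ A0.
have s0 : 0 < s by apply: powR_gt0; rewrite ltr0n.
have y0 : 0 < y by apply: powR_gt0; rewrite ltr0n; apply: leq_trans hJ.
have x4 : x ^+ 4 = A by apply: pw_pow; [exact: ltW | field].
have s4 : s ^+ 4 = T%:R by apply: pw_pow; [exact: ler0n | field].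
have y2 : y ^+ 2 = J%:R by apply: pw_pow; [exact: ler0n | field].
have A34 : A `^ (3/4) = x ^+ 3.
  rewrite /x -powR_mulrn ?powR_ge0 // -powRrM.
  by have -> : 1/4 * 3%:R = 3/4 :> R by field.
rewrite A34.
have J2 : (2 : R) <= J%:R by rewrite ler_nat.
have y1 : 1 <= y by nra.
have eta_val : eta * y * s = x.
  rewrite eta_eq !powRN -/y -/s; field.
  by apply/andP; split; apply: lt0r_neq0.
have eta0 : 0 < eta.
  rewrite eta_eq !powRN -/y -/s !mulr_gt0 ?invr_gt0 //; lra.
have LT : (L <= T)%N by rewrite /L /pred_errors -[X in (_ <= X)%N]card_ord max_card.
have hM : Mr <= 2 * x ^+ 4 by rewrite x4 /A; nra.
have hL1 : Lr <= Mr by rewrite /Lr /Mr ler_nat leq_addr.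
have hLT : Lr <= T%:R by rewrite /Lr ler_nat.
have Lr0 : 0 <= Lr by exact: ler0n.
have F4 : Lr <= 2 * x ^+ 3 * s.
  have c1 : Lr ^+ 3 <= (2 * x ^+ 4) ^+ 3.
    apply: lerXn2r; rewrite ?nnegrE //; [nra | exact: le_trans hL1 hM].
  have c2 : Lr ^+ 3 * Lr <= (2 * x ^+ 4) ^+ 3 * s ^+ 4.
    by apply: ler_pM; rewrite ?exprn_ge0 // s4.
  have c3 : (2 * x ^+ 3 * s) ^+ 4 = 2 * ((2 * x ^+ 4) ^+ 3 * s ^+ 4) by ring.
  have c4 : 0 <= (2 * x ^+ 4) ^+ 3 * s ^+ 4 by rewrite mulr_ge0 ?exprn_ge0 //; nra.
  rewrite -(ler_pXn2r (n := 4)) ?nnegrE //; last by nra.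
  have -> : Lr ^+ 4 = Lr ^+ 3 * Lr by rewrite exprSr.
  lra.
set nb := (#|[set t : 'I_T | bad Zs Zhat t]|%:R : R).
have nb0 : 0 <= nb by exact: ler0n.
have nbT : nb <= T%:R by rewrite /nb ler_nat nbad_T.
have nbM : nb <= 2 * Mr.
  apply: (le_trans (y := (m + 2 * L)%:R)); first by rewrite /nb ler_nat nbad_L.
  by rewrite /Mr natrD natrM natrD; lra.
have F5 : nb <= 2 * x ^+ 2 * s ^+ 2.
  have c1 : nb * nb <= T%:R * (4 * x ^+ 4) by apply: ler_pM => //; lra.
  rewrite -(ler_pXn2r (n := 2)) ?nnegrE //; last by nra.
  have -> : (2 * x ^+ 2 * s ^+ 2) ^+ 2 = T%:R * (4 * x ^+ 4) by rewrite -s4; ring.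
  by rewrite expr2.
have es0 : 0 <= eta * s by rewrite mulr_ge0 // ltW.
have hes : eta * s <= x by rewrite -eta_val; nra.
case: (lerP eta (1/12)) => e12.
  have MB : eta * regret_against T phi ctx Zs w j pi <=
    eta * (2 * Lr) + m%:R * ln K%:R
    + eta * (4 * eta * (4 * nb + T%:R * (J%:R * (12 * eta)) ^+ 2)) :=
    main_bound Zs Zhat hK hb T j eta0 e12 hpi'.
  have t0 : m%:R * ln K%:R <= x ^+ 4.
    rewrite x4 /A mulrC; apply: ler_wpM2l; first lra.
    by rewrite /Mr ler_nat leq_addl.
  have t1 : eta * (2 * Lr) <= 4 * x ^+ 4.
    have a1 : eta * Lr <= eta * (2 * x ^+ 3 * s) := ler_wpM2l (ltW eta0) F4.
    have a2 : x ^+ 3 * (eta * s) <= x ^+ 3 * x := ler_wpM2l (exprn_ge0 _ (ltW x0)) hes.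
    have a3 : x ^+ 4 = x ^+ 3 * x by rewrite exprSr.
    have a4 : eta * (2 * x ^+ 3 * s) = 2 * (x ^+ 3 * (eta * s)) by ring.
    lra.
  have t2 : eta * (4 * eta * (4 * nb)) <= 32 * x ^+ 4.
    have a1 : eta ^+ 2 * nb <= eta ^+ 2 * (2 * x ^+ 2 * s ^+ 2) :=
      ler_wpM2l (exprn_ge0 _ (ltW eta0)) F5.
    have a2 : (eta * s) ^+ 2 <= x ^+ 2 by apply: lerXn2r; rewrite ?nnegrE // ltW.
    have a3 : x ^+ 2 * (eta * s) ^+ 2 <= x ^+ 2 * x ^+ 2 :=
      ler_wpM2l (exprn_ge0 _ (ltW x0)) a2.
    have a4 : eta ^+ 2 * (2 * x ^+ 2 * s ^+ 2) = 2 * (x ^+ 2 * (eta * s) ^+ 2) by ring.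
    have a5 : x ^+ 4 = x ^+ 2 * x ^+ 2 by rewrite -exprD.
    have a6 : eta * (4 * eta * (4 * nb)) = 16 * (eta ^+ 2 * nb) by ring.
    lra.
  have t3 : eta * (4 * eta * (T%:R * (J%:R * (12 * eta)) ^+ 2)) = 576 * x ^+ 4.
    by rewrite -s4 -y2 -eta_val; ring.
  have t4 : eta * (4000 * x ^+ 3 * s * y) = 4000 * x ^+ 4.
    have -> : x ^+ 4 = x ^+ 3 * (eta * y * s) by rewrite eta_val exprSr.
    ring.
  rewrite -(ler_pM2l eta0) t4.
  apply: (le_trans MB).
  have -> : eta * (4 * eta * (4 * nb + T%:R * (J%:R * (12 * eta)) ^+ 2)) =
    eta * (4 * eta * (4 * nb)) + eta * (4 * eta * (T%:R * (J%:R * (12 * eta)) ^+ 2)) by ring.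
  rewrite t3; have := exprn_ge0 4 (ltW x0); lra.
have R2 : regret_against T phi ctx Zs w j pi <= 2 * T%:R :=
  regret_le2T eta Zs Zhat hK hb T j hpi'.
apply: (le_trans R2).
set u := y * s.
have u0 : 0 <= u by rewrite mulr_ge0 // ltW.
have hx : u / 12 <= x by rewrite -eta_val /u; nra.
have hx3 : (u / 12) ^+ 3 <= x ^+ 3 by apply: lerXn2r; rewrite ?nnegrE //; [lra | exact: ltW].
have hx4 : (u / 12) ^+ 3 * u <= x ^+ 3 * u := ler_wpM2r u0 hx3.
have y4 : 1 <= y ^+ 4.
  rewrite -(expr1n R 4); apply: lerXn2r; rewrite ?nnegrE //; lra.
have hu : T%:R <= u ^+ 4.
  rewrite -s4 /u exprMn; have := exprn_ge0 4 (ltW s0); nra.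
have e1 : (u / 12) ^+ 3 * u = u ^+ 4 / 1728 by field.
have e2 : 4000 * x ^+ 3 * s * y = 4000 * (x ^+ 3 * u) by rewrite /u; ring.
rewrite e2; lra.
Qed.
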